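(* Let $R$ be a ring with identity and involution $*$, and let $a,b\in R$ be dual core invertible with dual core inverses $a_{\oplus}$ and $b_{\oplus}$. If $ab=0=ba$ and $ab^*=0$, then $a+b$ is dual core invertible and $(a+b)_{\oplus}=a_{\oplus}+b_{\oplus}$.
   Context: An involution on $R$ satisfies $(a^* )^*=a$, $(ab)^*=b^*a^*$, $(a+b)^*=a^*+b^*$. An element $x\in R$ is a dual core inverse of $a$ if $axa=a$, $xR=a^*R$ and $Rx=Ra$; it is unique when it exists and is denoted $a_{\oplus}$. *)

(* Defs.v *)
From HB Require Import structures.
From mathcomp Require Import all_boot all_algebra.
Set Implicit Arguments. Unset Strict Implicit. Unset Printing Implicit Defensive.
Import GRing.Theory.
Local Open Scope ring_scope.

Definition involution (R : pzRingType) (star : R -> R) : Prop :=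
  [/\ forall a, star (star a) = a,
      forall a b, star (a * b) = star b * star a &
      forall a b, star (a + b) = star a + star b].

Definition is_dual_core_inverse (R : pzRingType) (star : R -> R) (a x : R) : Prop :=
  [/\ a * x * a = a,
      (forall y : R, (exists r, y = x * r) <-> (exists r, y = star a * r)) &
      (forall y : R, (exists r, y = r * x) <-> (exists r, y = r * a))].

Definition dual_core_invertible (R : pzRingType) (star : R -> R) (a : R) : Prop :=
  exists x, is_dual_core_inverse star a x.

(* Main.v *)
Require Import Defs.
From HB Require Import structures.
From mathcomp Require Import all_boot all_algebra.
Local Open Scope ring_scope.
Import GRing.Theory.

Lemma star0 (R : pzRingType) (star : R -> R) : involution star -> star 0 = 0.
Proof.
case=> _ _ sadd. have := sadd 0 0. rewrite addr0 => h.
by apply: (addrI (star 0)); rewrite addr0 -h.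
Qed.

Lemma dci_facts (R : pzRingType) (star : R -> R) (a x : R) :
  involution star -> is_dual_core_inverse star a x ->
  [/\ exists r1, x = star a * r1, exists s1, star a = x * s1,
      exists r2, x = r2 * a, exists r3, a = r3 * x &
      [/\ x * a * x = x, x * x * a = x & star a * star x * x = x]].
Proof.
move=> inv [h1 h2 h3]; have [sK smul sadd] := inv.
have [r1 e1] : exists r1, x = star a * r1 by apply/h2; exists 1; rewrite mulr1.
have [s1 e2] : exists s1, star a = x * s1 by apply/h2; exists 1; rewrite mulr1.
have [r2 e3] : exists r2, x = r2 * a by apply/h3; exists 1; rewrite mul1r.
have [r3 e4] : exists r3, a = r3 * x by apply/h3; exists 1; rewrite mul1r.
have sa : star a * star x * star a = star a.
  by rewrite -{3}h1 smul smul mulrA.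
have xs : star x = star r1 * a by rewrite e1 smul sK.
have xxa : x * x * a = x by rewrite {1}e3 -!mulrA (mulrA a x a) h1 -e3.
have axx : star a * star x * x = x by rewrite {2}e1 mulrA sa -e1.
split; [by exists r1|by exists s1|by exists r2|by exists r3|split=>//].
set u := x * a * x - x.
have au : a * u = 0 by rewrite /u mulrBr !mulrA h1 subrr.
have uR : u = star a * (r1 * a * x - r1).
  by rewrite /u mulrBr !mulrA -e1.
have : u = 0.
  by rewrite uR -sa -(mulrA _ _ (_ - _)) -uR xs -mulrA -(mulrA _ a) au !mulr0.
by move/eqP; rewrite subr_eq0 => /eqP.
Qed.

Theorem corollary4p9 (R : pzRingType) (star : R -> R) (a b ainv binv : R) :
  involution star ->
  is_dual_core_inverse star a ainv ->
  is_dual_core_inverse star b binv ->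
  a * b = 0 -> b * a = 0 -> a * star b = 0 ->
  dual_core_invertible star (a + b) /\
  is_dual_core_inverse star (a + b) (ainv + binv).
Proof.
move=> inv ha hb ab ba abs.
have s0 := @star0 R star inv.
have [sK smul sadd] := inv.
have [[r1 ex1] [s1 ex2] [r2 ex3] [r3 ex4] [xax xxa axx]] := @dci_facts R star a ainv inv ha.
have [[q1 ey1] [t1 ey2] [q2 ey3] [q3 ey4] [yby yyb byy]] := @dci_facts R star b binv inv hb.
set x := ainv in ex1 ex2 ex3 ex4 xax xxa axx *.
set y := binv in ey1 ey2 ey3 ey4 yby yyb byy *.
have xb : x * b = 0 by rewrite ex3 -mulrA ab mulr0.
have ya : y * a = 0 by rewrite ey3 -mulrA ba mulr0.
have bas : b * star a = 0 by rewrite -(sK b) -smul abs s0.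
have bx : b * x = 0 by rewrite ex1 mulrA bas mul0r.
have ay : a * y = 0 by rewrite ey1 mulrA abs mul0r.
have bsxs : star b * star x = 0 by rewrite -smul xb s0.
have asys : star a * star y = 0 by rewrite -smul ya s0.
have h1 : a * x * a = a by case: ha.
have h2 : b * y * b = b by case: hb.
have e1 : (a + b) * (x + y) = a * x + b * y.
  by rewrite mulrDl !mulrDr ay bx addr0 add0r.
have H : is_dual_core_inverse star (a + b) (x + y).
  split.
  - rewrite e1 mulrDl !mulrDr -!(mulrA _ _ a) -!(mulrA _ _ b) xb ya !mulr0.
    by rewrite addr0 add0r !mulrA h1 h2.
  - move=> z; split=> -[r ->].
    + exists ((star x * x + star y * y) * r).
      have -> : star (a + b) * ((star x * x + star y * y) * r)
          = (star a * star x * x + star b * star y * y) * r.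
        rewrite sadd mulrA !mulrDl !mulrDr !mulrA asys bsxs !mul0r.
        by rewrite addr0 add0r.
      by rewrite axx byy mulrDl.
    + exists ((a * x * s1 + b * y * t1) * r).
      have -> : (x + y) * ((a * x * s1 + b * y * t1) * r)
          = (x * a * x * s1 + y * b * y * t1) * r.
        rewrite mulrA !mulrDl !mulrDr !mulrA.
        rewrite xb ya !mul0r.
        by rewrite addr0 add0r.
      by rewrite xax yby -ex2 -ey2 sadd.
  - move=> z; split=> -[r ->].
    + exists (r * (x * x + y * y)).
      have -> : r * (x * x + y * y) * (a + b) = r * (x * x * a + y * y * b).
        rewrite -mulrA !mulrDl !mulrDr !mulrA -(mulrA (r * x) x b) -(mulrA (r * y) y a) xb ya !mulr0.
        by rewrite addr0 add0r.
      by rewrite xxa yyb.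
    + exists (r * (r3 * x * a + q3 * y * b)).
      have -> : r * (r3 * x * a + q3 * y * b) * (x + y)
          = r * (r3 * (x * a * x) + q3 * (y * b * y)).
        rewrite -mulrA !mulrDl !mulrDr !mulrA.
        rewrite -(mulrA (r * r3 * x) a y) -(mulrA (r * q3 * y) b x) ay bx !mulr0.
        by rewrite addr0 add0r .
      by rewrite xax yby -ex4 -ey4.
split=>//; by exists (x + y).
Qed.
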